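(* Let $r=2$, $F$ free on $x,y$, and let $c=[[x,y],[[x,y],y]]\in F_5$. Let $\phi$ be the endomorphism of $F$ with $x\mapsto xc$, $y\mapsto y$. Then $\phi$ is not an automorphism of $F$ (it extends to an element of $B_4$ not coming from $A_4$), although $\widetilde D\phi-$ has trace $\partial c/\partial x\in\varpi^4$ whose image in $\varpi^4/\varpi^5\cong\mathcal R_4$ lies in $\mathcal R_4^+$; i.e. $J=D\phi$ satisfies $J-\mathbb 1\in M_2(\varpi^4)$ and $\tau(\operatorname{tr}(J-\mathbb 1))\bmod \varpi^5\in\mathcal R_4^+$, yet $J$ is not invertible over $\mathbb ZF$.
   Context: $[u,v]=u^{-1}v^{-1}uv$; $F_1=F$, $F_{n+1}=[F_n,F]$. $A_n=\ker(\mathrm{Aut}(F)\to\mathrm{Aut}(F/F_{n+1}))$; $B_n$ is the kernel of $\mathrm{Aut}_{\mathrm{cont}}(\hat F)\to\mathrm{Aut}(\hat F/\hat F_{n+1})$ for the pronilpotent completion $\hat F$. Fox derivatives: additive maps $\partial/\partial x_j$ on $\mathbb ZF$ with $\partial x_j/\partial x_j=1$, $\partial x_l/\partial x_j=0$ ($l\ne j$), $\partial(uv)/\partial x_j=\frac{\partial u}{\partial x_j}o(v)+u\frac{\partial v}{\partial x_j}$, $o$ the augmentation, $\varpi=\ker o$. The Jacobian of an endomorphism is $D\phi=(\partial(x_i^\phi)/\partial x_j)_{i,j}$, $\widetilde D\phi=D\phi-\mathbb 1$. $\tau:\mathbb ZF\to\mathbb Z\langle\langle X,Y\rangle\rangle$,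 $x\mapsto1+X$, $y\mapsto1+Y$, identifies $\varpi^4/\varpi^5$ with the degree-4 part $\mathcal R_4$. $\mathcal R_4^+=\mathcal R_4(1-\gamma)$ where $\gamma$ cyclically rotates monomials, $(Z_1Z_2Z_3Z_4)^\gamma=Z_2Z_3Z_4Z_1$. *)

(* Defs.v *)
From HB Require Import structures.
From mathcomp Require Import all_boot all_order all_algebra.
Set Implicit Arguments. Unset Strict Implicit. Unset Printing Implicit Defensive.
Import Order.TTheory GRing.Theory Num.Theory.
Local Open Scope ring_scope.

Definition gen := bool.
Definition gx : gen := false.
Definition gy : gen := true.

(* a letter (g, e): e = false means g, e = true means g^-1 *)
Definition letter := (gen * bool)%type.
Definition word := seq letter.
Definition linv (l : letter) : letter := (l.1, ~~ l.2).

(* free reduction; two words represent the same element of F iff their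
   reductions coincide *)
Definition push (l : letter) (s : word) : word :=
  match s with
  | l' :: s' => if l' == linv l then s' else l :: s
  | [::] => [:: l]
  end.
Definition reduce (w : word) : word := foldr push [::] w.
Definition eqF (u v : word) : Prop := reduce u = reduce v.

Definition winv (w : word) : word := rev (map linv w).
Definition wx : word := [:: (gx, false)].
Definition wy : word := [:: (gy, false)].
Definition comm (u v : word) : word := winv u ++ winv v ++ u ++ v.

Definition ext (f : gen -> word) (w : word) : word :=
  flatten [seq (if l.2 then winv (f l.1) else f l.1) | l <- w].

Definition isAut (f : gen -> word) : Prop :=
  (forall u v, eqF (ext f u) (ext f v) -> eqF u v) /\
  (forall v, exists u, eqF (ext f u) v).

(* lower central series: F_1 = F, F_{n+1} = [F_n, F] (subgroup generated) *)
Inductive lcs : nat -> word -> Prop :=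
| lcs_one w : lcs 1 w
| lcs_comm n u v : lcs n u -> lcs n.+1 (comm u v)
| lcs_nil n : lcs n [::]
| lcs_mul n u v : lcs n u -> lcs n v -> lcs n (u ++ v)
| lcs_inv n u : lcs n u -> lcs n (winv u)
| lcs_eqF n u v : eqF u v -> lcs n u -> lcs n v.

(* integral group ring ZF: formal finite sums  sum_i z_i w_i *)
Definition ZF := seq (int * word).
Definition coef (a : ZF) (g : word) : int :=
  \sum_(p <- a | reduce p.2 == reduce g) p.1.
Definition eqZF (a b : ZF) : Prop := forall g, coef a g = coef b g.

Definition elt (w : word) : ZF := [:: (1, w)].
Definition zeroZF : ZF := [::].
Definition oneZF : ZF := elt [::].
Definition addZF (a b : ZF) : ZF := a ++ b.
Definition scaleZF (z : int) (a : ZF) : ZF := [seq (z * p.1, p.2) | p <- a].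
Definition oppZF (a : ZF) : ZF := scaleZF (-1) a.
Definition subZF (a b : ZF) : ZF := addZF a (oppZF b).
Definition mulZF (a b : ZF) : ZF :=
  [seq (p.1 * q.1, p.2 ++ q.2) | p <- a, q <- b].
Definition prodZF (s : seq ZF) : ZF := foldr mulZF oneZF s.
Definition sumZF (s : seq ZF) : ZF := flatten s.

Definition aug (a : ZF) : int := \sum_(p <- a) p.1.
Definition inAugPow (n : nat) (a : ZF) : Prop :=
  exists s : seq (seq ZF),
    (forall l, l \in s -> size l = n /\ forall b, b \in l -> aug b = 0) /\
    eqZF a (sumZF [seq prodZF l | l <- s]).

(* Fox derivatives; on words via d(uv) = du + u dv (o(v) = 1), extended
   additively *)
Definition fox_letter (j : gen) (l : letter) : ZF :=
  if l.1 == j then (if l.2 then [:: (-1, [:: l])] else oneZF) else zeroZF.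
Fixpoint foxw (j : gen) (w : word) : ZF :=
  match w with
  | [::] => zeroZF
  | l :: w' => addZF (fox_letter j l) (mulZF (elt [:: l]) (foxw j w'))
  end.
Definition fox (j : gen) (a : ZF) : ZF :=
  sumZF [seq scaleZF p.1 (foxw j p.2) | p <- a].

Definition mx2 := gen -> gen -> ZF.
Definition mx2_one : mx2 := fun i j => if i == j then oneZF else zeroZF.
Definition mx2_mul (A B : mx2) : mx2 :=
  fun i k => addZF (mulZF (A i gx) (B gx k)) (mulZF (A i gy) (B gy k)).
Definition mx2_sub (A B : mx2) : mx2 := fun i j => subZF (A i j) (B i j).
Definition mx2_trace (A : mx2) : ZF := addZF (A gx gx) (A gy gy).
Definition mx2_invertible (A : mx2) : Prop :=
  exists K : mx2, forall i j,
    eqZF (mx2_mul A K i j) (mx2_one i j) /\ eqZF (mx2_mul K A i j) (mx2_one i j).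

Definition jacobian (f : gen -> word) : mx2 := fun i j => fox j (elt (f i)).

(* tau : x -> 1+X, y -> 1+Y, into Z<<X,Y>>; coefficient of a monomial m
   (a sequence of generators) in tau(a). x^-1 -> sum_k (-X)^k. *)
Definition tau_letter (l : letter) (b : seq gen) : int :=
  if all (fun g => g == l.1) b then
    (if l.2 then (-1) ^+ size b else (if (size b <= 1)%N then 1 else 0))
  else 0.
Fixpoint tauw (w : word) (m : seq gen) : int :=
  match w with
  | [::] => if m is [::] then 1 else 0
  | l :: w' => \sum_(k < (size m).+1) tau_letter l (take k m) * tauw w' (drop k m)
  end.
Definition tau_coef (a : ZF) (m : seq gen) : int := \sum_(p <- a) p.1 * tauw p.2 m.

(* R_4^+ = R_4 (1 - gamma), (Z1Z2Z3Z4)^gamma = Z2Z3Z4Z1 = rot 1 [Z1;..;Z4];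
   a degree-4 element q lies in R_4^+ iff q = p - p^gamma for some p in R_4,
   i.e. q_m = p_m - p_(rotr 1 m) for all monomials m of degree 4. *)
Definition inR4plus (q : seq gen -> int) : Prop :=
  exists p : seq gen -> int, forall m, size m = 4%N -> q m = p m - p (rotr 1 m).

Definition c13 : word := comm (comm wx wy) (comm (comm wx wy) wy).
Definition phi13 (g : gen) : word := if g == gx then wx ++ c13 else wy.

(* Main.v *)
Require Import Defs.
From HB Require Import structures.
From mathcomp Require Import all_boot all_order all_algebra.
Import Order.TTheory GRing.Theory Num.Theory.
Local Open Scope ring_scope.
Set Implicit Arguments. Unset Strict Implicit. Unset Printing Implicit Defensive.

Lemma linvK (l : letter) : linv (linv l) = l.
Proof. by case: l => g e; rewrite /linv /= negbK. Qed.

Fixpoint red (s : word) : bool :=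
  match s with
  | a :: ((b :: _) as s') => (b != linv a) && red s'
  | _ => true
  end.

Lemma red_tail l s : red (l :: s) -> red s.
Proof. by case: s => //= b s /andP[]. Qed.

Lemma push_red l s : red s -> red (push l s).
Proof.
case: s => [|l' s] //= Hs.
case: ifP => [_|/negbT H]; first exact: red_tail Hs.
by rewrite /= H Hs.
Qed.

Lemma red_reduce w : red (reduce w).
Proof. by elim: w => //= l w IH; exact: push_red. Qed.

Lemma push_cancel l t : red t -> push l (push (linv l) t) = t.
Proof.
case: t => [|l0 t] /=; first by rewrite eqxx.
rewrite linvK; case: eqP => [-> Ht|Hne Ht].
  case: t Ht => [|l1 t] //= /andP[H1 _].
  by rewrite (negbTE H1).
by rewrite /= eqxx.
Qed.

Lemma reduce_red s : red s -> reduce s = s.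
Proof.
elim: s => //= l s IH Hs.
rewrite IH; last exact: red_tail Hs.
case: s Hs {IH} => //= b s /andP[H _].
by rewrite (negbTE H).
Qed.

Lemma reduceK w : reduce (reduce w) = reduce w.
Proof. exact/reduce_red/red_reduce. Qed.

Lemma winv_cons l w : winv (l :: w) = winv w ++ [:: linv l].
Proof. by rewrite /winv map_cons rev_cons cats1. Qed.

Lemma winv_cat u v : winv (u ++ v) = winv v ++ winv u.
Proof. by rewrite /winv map_cat rev_cat. Qed.

Lemma winvK w : winv (winv w) = w.
Proof. by rewrite /winv map_rev revK -map_comp map_id_in // => l _ /=; rewrite linvK. Qed.

Lemma reduce_cat u v : reduce (u ++ v) = foldr push (reduce v) u.
Proof. by rewrite /reduce foldr_cat. Qed.

Lemma cancel_reduce w v : reduce (w ++ winv w ++ v) = reduce v.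
Proof.
elim: w v => //= l w IH v.
rewrite winv_cons -catA /= IH /= -/(reduce v).
exact/push_cancel/red_reduce.
Qed.

Lemma eqF_sym u v : eqF u v -> eqF v u.
Proof. by []. Qed.

Lemma eqF_pre u X Y : eqF X Y -> eqF (u ++ X) (u ++ Y).
Proof. by rewrite /eqF !reduce_cat => ->. Qed.

Lemma eqF_cancel u w v : eqF (u ++ w ++ winv w ++ v) (u ++ v).
Proof. apply: eqF_pre; exact: cancel_reduce. Qed.

Lemma eqF_cancel' u w v : eqF (u ++ winv w ++ w ++ v) (u ++ v).
Proof. by have := eqF_cancel u (winv w) v; rewrite winvK. Qed.


Lemma lcs_mono m w : lcs m w -> forall k, (1 <= k <= m)%N -> lcs k w.
Proof.
elim => {m w}.
- move=> w k /andP[H1 H2]; have -> : k = 1%N by apply/eqP; rewrite eqn_leq H2 H1.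
  exact: lcs_one.
- move=> n u v _ IH k /andP[H1 H2].
  case: k H1 H2 => [|[|k]] // _ H2; first exact: lcs_one.
  apply: lcs_comm; apply: IH; by rewrite /=.
- by move=> n k _; exact: lcs_nil.
- by move=> n u v _ IH1 _ IH2 k Hk; apply: lcs_mul; [exact: IH1|exact: IH2].
- by move=> n u _ IH k Hk; apply: lcs_inv; exact: IH.
- by move=> n u v E _ IH k Hk; apply: lcs_eqF E _; exact: IH.
Qed.

Definition conj (w g : word) : word := winv g ++ w ++ g.

Lemma lcs_conj n w g : (1 <= n)%N -> lcs n w -> lcs n (conj w g).
Proof.
move=> Hn Hw.
have H1 : lcs n (comm w g).
  by apply: (lcs_mono (lcs_comm g Hw)); rewrite Hn leqnSn.
have := lcs_mul Hw H1; apply: lcs_eqF.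
rewrite /comm /conj.
by have := eqF_cancel [::] w (winv g ++ w ++ g).
Qed.

Definition x_ : letter := (gx, false).
Definition xi_ : letter := (gx, true).
Definition y_ : letter := (gy, false).
Definition yi_ : letter := (gy, true).

Lemma lcs5_c13 : lcs 5 c13.
Proof.
pose a := comm wx wy. pose b := comm a wy.
have Ha : lcs 2 a by apply: lcs_comm; exact: lcs_one.
have Hb : lcs 3 b by apply: lcs_comm.
pose Bx := comm b [:: x_]. pose By := comm b [:: y_].
have HBx : lcs 4 Bx by apply: lcs_comm.
have HBy : lcs 4 By by apply: lcs_comm.
pose e2 := comm Bx [:: y_].
pose e3 := comm (winv By) [:: yi_; x_; y_].
pose e4 := comm (winv Bx) [:: xi_; yi_; x_; y_].
have H2 : lcs 5 e2 by apply: lcs_comm.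
have H3 : lcs 5 e3 by apply: lcs_comm; apply: lcs_inv.
have H4 : lcs 5 e4 by apply: lcs_comm; apply: lcs_inv.
have H1 : lcs 5 (comm (winv By) (winv Bx)) by apply: lcs_comm; apply: lcs_inv.
have HQ : lcs 5 (comm (winv By) (winv Bx) ++ conj (conj e2 (winv By) ++ e3) (winv Bx) ++ e4).
  apply: lcs_mul => //; apply: lcs_mul => //; apply: lcs_conj => //.
  by apply: lcs_mul => //; apply: lcs_conj.
have HP : lcs 5 (comm b a) by apply: lcs_eqF HQ; vm_compute.
have := lcs_inv HP.
by vm_compute.
Qed.

Lemma ext_cons f l w :
  ext f (l :: w) = (if l.2 then winv (f l.1) else f l.1) ++ ext f w.
Proof. by []. Qed.

Lemma eqF_trans u v w : eqF u v -> eqF v w -> eqF u w.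
Proof. by rewrite /eqF => ->. Qed.

Lemma lcs5_ext w : lcs 5 (winv w ++ ext phi13 w).
Proof.
elim: w => [|l w IH]; first exact: lcs_nil.
rewrite ext_cons winv_cons -catA.
set E := ext phi13 w.
case: l => [[|] [|]].
- change (lcs 5 (winv w ++ [:: y_] ++ [:: yi_] ++ E)).
  apply: lcs_eqF IH; apply: eqF_sym.
  exact: (eqF_cancel (winv w) [:: y_] E).
- change (lcs 5 (winv w ++ winv [:: y_] ++ [:: y_] ++ E)).
  apply: lcs_eqF IH; apply: eqF_sym.
  exact: (eqF_cancel' (winv w) [:: y_] E).
- change (lcs 5 (winv w ++ [:: x_] ++ (winv c13 ++ winv [:: x_]) ++ E)).
  have Hc : lcs 5 (conj (winv c13) (winv [:: x_] ++ w)).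
    by apply: lcs_conj => //; apply: lcs_inv; exact: lcs5_c13.
  have := lcs_mul Hc IH; apply: lcs_eqF.
  rewrite /conj winv_cat winvK -!catA.
  by have := eqF_cancel (winv w ++ [:: x_] ++ winv c13 ++ winv [:: x_]) w E; rewrite -!catA.
- change (lcs 5 (winv w ++ winv [:: x_] ++ ([:: x_] ++ c13) ++ E)).
  have Hc : lcs 5 (conj c13 w) by apply: lcs_conj => //; exact: lcs5_c13.
  have := lcs_mul Hc IH; apply: lcs_eqF.
  rewrite /conj -!catA.
  have := eqF_cancel (winv w ++ c13) w E; rewrite -!catA => H.
  apply: (eqF_trans H); apply: eqF_sym.
  exact: (eqF_cancel' (winv w) [:: x_] (c13 ++ E)).
Qed.


Definition tx : seq nat := [:: 0; 1; 3; 2]%N.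
Definition ty : seq nat := [:: 1; 2; 0; 3]%N.
Definition tyi : seq nat := [:: 2; 0; 1; 3]%N.
Definition tab (l : letter) : seq nat :=
  match l with
  | (false, _) => tx
  | (true, false) => ty
  | (true, true) => tyi
  end.
Definition act_letter (l : letter) (q : nat) : nat := nth q (tab l) q.
Definition act (w : word) (q : nat) : nat := foldr act_letter q w.

Lemma act_letter_cancel l q : act_letter l (act_letter (linv l) q) = q.
Proof.
case: l => [[|] [|]];
do 4 (case: q => [|q]; first by []);
by rewrite /act_letter !nth_default.
Qed.

Lemma act_push l s q : act (push l s) q = act_letter l (act s q).
Proof.
case: s => [|l' s] //=.
case: eqP => [->|] //=.
by rewrite act_letter_cancel.
Qed.

Lemma act_reduce w q : act (reduce w) q = act w q.
Proof.
elim: w q => //= l w IH q.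
by rewrite act_push IH.
Qed.

Lemma act_cat u v q : act (u ++ v) q = act u (act v q).
Proof. by rewrite /act foldr_cat. Qed.

Lemma act_big w q : (4 <= q)%N -> act w q = q.
Proof.
move=> Hq; elim: w => //= l w ->.
by case: l => [[|] [|]]; rewrite /act_letter nth_default.
Qed.

Lemma not_aut : ~ isAut phi13.
Proof.
case=> _ /(_ wx) [u Hu].
have Hfix : act (ext phi13 u) 3 = 3%N.
  elim: u {Hu} => //= l u IH.
  rewrite act_cat IH.
  by case: l => [[|] [|]]; vm_compute.
have := act_reduce (ext phi13 u) 3.
by rewrite Hu act_reduce Hfix.
Qed.

Definition ract (f : nat -> int) (a : ZF) (q : nat) : int :=
  \sum_(p <- a) p.1 * f (act p.2 q).

Lemma ractE f a q : ract f a q = foldr (fun p acc => p.1 * f (act p.2 q) + acc) 0 a.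
Proof. by rewrite /ract; elim: a => [|p a IH] /=; rewrite ?big_nil ?big_cons ?IH. Qed.

Lemma ract_cat f a b q : ract f (a ++ b) q = ract f a q + ract f b q.
Proof. by rewrite /ract big_cat. Qed.

Lemma ract_ext f g a q : (forall q, f q = g q) -> ract f a q = ract g a q.
Proof. by move=> H; apply: eq_bigr => p _; rewrite H. Qed.

Lemma ract_f0 f a q : (forall q, f q = 0) -> ract f a q = 0.
Proof. by move=> H; apply: big1 => p _; rewrite H mulr0. Qed.

Lemma ract_mul f a b q : ract f (mulZF a b) q = ract (ract f a) b q.
Proof.
elim: a q => [|p a IH] q.
  rewrite /mulZF /= {1}/ract big_nil; symmetry.
  by apply: ract_f0 => q'; rewrite /ract big_nil.
have -> : mulZF (p :: a) b =
  [seq (p.1 * q'.1, p.2 ++ q'.2) | q' <- b] ++ mulZF a b by [].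
rewrite ract_cat IH.
rewrite /ract big_map -big_split /=.
apply: eq_bigr => q' _.
rewrite big_cons act_cat mulrDr; congr (_ + _).
by rewrite mulrA [p.1 * _]mulrC.
Qed.

Lemma ract_regroup f a q (S : seq word) :
  uniq S -> (forall p, p \in a -> reduce p.2 \in S) ->
  (forall r, r \in S -> reduce r = r) ->
  ract f a q = \sum_(r <- S) coef a r * f (act r q).
Proof.
move=> US HaS HS.
rewrite /coef.
under eq_big_seq => r Hr do rewrite (HS r Hr) mulr_suml big_mkcond.
rewrite exchange_big /=.
apply: eq_big_seq => p Hp.
rewrite (bigD1_seq (reduce p.2)) ?HaS //= eqxx act_reduce.
rewrite big1_seq ?addr0 // => r /andP[Hne _].
by rewrite eq_sym (negbTE Hne).
Qed.

Lemma ract_eqZF f a b q : eqZF a b -> ract f a q = ract f b q.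
Proof.
move=> E.
set S := undup [seq reduce p.2 | p <- a ++ b].
have US : uniq S by exact: undup_uniq.
have HS : forall r, r \in S -> reduce r = r.
  by move=> r; rewrite mem_undup => /mapP[p _ ->]; exact: reduceK.
rewrite (@ract_regroup f a q S) // ?(@ract_regroup f b q S) //.
- by apply: eq_bigr => r _; rewrite E.
- by move=> p Hp; rewrite mem_undup; apply: map_f; rewrite mem_cat Hp orbT.
- by move=> p Hp; rewrite mem_undup; apply: map_f; rewrite mem_cat Hp.
Qed.

Definition f0 (q : nat) : int := nth 0 [:: 1; -2; 1; 0] q.


Lemma f0_Jxx q : ract f0 (jacobian phi13 gx gx) q = 0.
Proof.
case: (ltnP q 4) => Hq.
  rewrite ractE.
  by do 4 (case: q Hq => [|q] Hq; first by vm_compute).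
rewrite /ract big1 // => p _.
by rewrite act_big // /f0 nth_default ?mulr0.
Qed.

Lemma not_inv : ~ mx2_invertible (jacobian phi13).
Proof.
case=> K HK.
set J := jacobian phi13.
have HKyx : forall g q, ract g (K gy gx) q = 0.
  move=> g q.
  have := ract_eqZF g q (proj1 (HK gy gx)).
  rewrite /mx2_mul /mx2_one /= ract_mul (@ract_ext _ g); last first.
    by move=> q'; rewrite ractE /= mulr1 addr0 mul1r.
  by move=> ->; rewrite /ract big_nil.
have := ract_eqZF f0 0 (proj1 (HK gx gx)).
rewrite /mx2_mul /mx2_one /= ract_cat !ract_mul HKyx addr0.
rewrite (@ract_f0 (ract f0 (jacobian phi13 gx gx))); last by move=> q'; exact: f0_Jxx.
by rewrite ractE.
Qed.


Definition X : letter := (false, false).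
Definition Xi : letter := (false, true).
Definition Y : letter := (true, false).
Definition Yi : letter := (true, true).

Definition coefC (a : ZF) (r : word) : int :=
  foldr (fun p acc => (if reduce p.2 == r then p.1 else 0) + acc) 0 a.

Lemma coefE a g : coef a g = coefC a (reduce g).
Proof.
rewrite /coef big_mkcond; elim: a => [|p a IH]; rewrite ?big_nil ?big_cons //=.
by rewrite IH.
Qed.

Definition augC (a : ZF) : int := foldr (fun p acc => p.1 + acc) 0 a.
Lemma augE a : aug a = augC a.
Proof. by rewrite /aug; elim: a => [|p a IH]; rewrite ?big_nil ?big_cons //= IH. Qed.

Definition eqZFb (a b : ZF) : bool :=
  all (fun r => coefC a r == coefC b r) (undup [seq reduce p.2 | p <- a ++ b]).

Lemma coefC_out a r : (forall p, p \in a -> reduce p.2 != r) -> coefC a r = 0.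
Proof.
elim: a => //= p a IH H.
rewrite (negbTE (H p (mem_head _ _))) add0r IH // => p' Hp'.
by apply: H; rewrite in_cons Hp' orbT.
Qed.

Lemma eqZFb_sound a b : eqZFb a b -> eqZF a b.
Proof.
move=> /allP H g; rewrite !coefE.
case Hr: (reduce g \in undup [seq reduce p.2 | p <- a ++ b]).
  by apply/eqP; apply: H.
rewrite !coefC_out // => p Hp; apply/eqP => E; move/negbT: Hr; rewrite mem_undup;
  move/negP; apply; rewrite -E; apply: map_f; rewrite mem_cat Hp ?orbT //.
Qed.

Definition augPowb (n : nat) (a : ZF) (s : seq (seq ZF)) : bool :=
  all (fun l => (size l == n) && all (fun b => augC b == 0) l) s &&
  eqZFb a (sumZF [seq prodZF l | l <- s]).

Lemma augPowb_sound n a s : augPowb n a s -> inAugPow n a.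
Proof.
case/andP=> /allP H1 H2; exists s; split; last exact: eqZFb_sound.
move=> l /H1 /andP[/eqP -> /allP H3]; split => // b /H3 /eqP.
by rewrite augE.
Qed.
Definition s_exx : seq (seq ZF) :=
  [:: [:: [:: (Posz 1, [:: X; Yi; Xi; Y]); (Negz 0, [:: X; Yi; Xi; Y; X; Yi; Yi; Xi]); (Posz 2, [:: X; Yi; Xi; Y; X; Yi; Yi; Xi; Y]); (Negz 1, [:: X; Yi; Xi; Y; X; Yi; Yi; Xi; Y; X; Y; Xi])]; [:: (Posz 1, [:: X]); (Negz 0, [::])]; [:: (Posz 1, [:: X]); (Negz 0, [::])]; [:: (Posz 1, [:: Y]); (Negz 0, [::])]];
  [:: [:: (Negz 0, [:: X; Yi; Xi; Y; X; Yi]); (Negz 0, [:: X; Yi; Xi; Y; X; Yi; Yi]); (Posz 2, [:: X; Yi; Xi; Y; X; Yi; Yi; Xi; Y; X])]; [:: (Posz 1, [:: Y]); (Negz 0, [::])]; [:: (Posz 1, [:: X]); (Negz 0, [::])]; [:: (Posz 1, [:: Y]); (Negz 0, [::])]];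
  [:: [:: (Posz 1, [:: X; Yi; Xi; Y]); (Posz 1, [:: X; Yi; Xi; Y; X; Yi; Yi; Xi]); (Posz 1, [:: X; Yi; Xi; Y; X; Yi; Yi; Xi; Y]); (Negz 2, [:: X; Yi; Xi; Y; X; Yi; Yi; Xi; Y; X; Y; Xi])]; [:: (Posz 1, [:: X]); (Negz 0, [::])]; [:: (Posz 1, [:: Y]); (Negz 0, [::])]; [:: (Posz 1, [:: Y]); (Negz 0, [::])]];
  [:: [:: (Posz 1, [:: X; Yi; Xi]); (Negz 0, [:: X; Yi; Xi; Y; X; Yi]); (Posz 1, [:: X; Yi; Xi; Y; X; Yi; Yi; Xi]); (Posz 3, [:: X; Yi; Xi; Y; X; Yi; Yi; Xi; Y; X]); (Negz 2, [:: X; Yi; Xi; Y; X; Yi; Yi; Xi; Y; X; Y; Xi; Yi]); (Negz 0, [:: X; Yi; Xi; Y; X; Yi; Yi; Xi; Y; X; Y; Xi; Yi; Yi])]; [:: (Posz 1, [:: Y]); (Negz 0, [::])]; [:: (Posz 1, [:: Y]); (Negz 0, [::])]; [:: (Posz 1, [:: Y]); (Negz 0, [::])]]].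

Definition s_exy : seq (seq ZF) :=
  [:: [:: [:: (Negz 0, [:: X; Yi; Xi; Y]); (Posz 1, [:: X; Yi; Xi; Y; X; Yi; Yi; Xi]); (Negz 1, [:: X; Yi; Xi; Y; X; Yi; Yi; Xi; Y]); (Posz 2, [:: X; Yi; Xi; Y; X; Yi; Yi; Xi; Y; X; Y; Xi])]; [:: (Posz 1, [:: X]); (Negz 0, [::])]; [:: (Posz 1, [:: X]); (Negz 0, [::])]; [:: (Posz 1, [:: X]); (Negz 0, [::])]];
  [:: [:: (Posz 1, [:: X; Yi; Xi; Y; X; Yi]); (Posz 1, [:: X; Yi; Xi; Y; X; Yi; Yi]); (Negz 1, [:: X; Yi; Xi; Y; X; Yi; Yi; Xi; Y; X])]; [:: (Posz 1, [:: Y]); (Negz 0, [::])]; [:: (Posz 1, [:: X]); (Negz 0, [::])]; [:: (Posz 1, [:: X]); (Negz 0, [::])]];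
  [:: [:: (Negz 0, [:: X; Yi; Xi; Y]); (Negz 0, [:: X; Yi; Xi; Y; X; Yi; Yi; Xi]); (Negz 1, [:: X; Yi; Xi; Y; X; Yi; Yi; Xi; Y]); (Posz 4, [:: X; Yi; Xi; Y; X; Yi; Yi; Xi; Y; X; Y; Xi])]; [:: (Posz 1, [:: X]); (Negz 0, [::])]; [:: (Posz 1, [:: Y]); (Negz 0, [::])]; [:: (Posz 1, [:: X]); (Negz 0, [::])]];
  [:: [:: (Negz 0, [:: X; Yi; Xi]); (Posz 1, [:: X; Yi; Xi; Y; X; Yi]); (Negz 1, [:: X; Yi; Xi; Y; X; Yi; Yi; Xi]); (Negz 3, [:: X; Yi; Xi; Y; X; Yi; Yi; Xi; Y; X]); (Posz 4, [:: X; Yi; Xi; Y; X; Yi; Yi; Xi; Y; X; Y; Xi; Yi]); (Posz 2, [:: X; Yi; Xi; Y; X; Yi; Yi; Xi; Y; X; Y; Xi; Yi; Yi])]; [:: (Posz 1, [:: Y]); (Negz 0, [::])]; [:: (Posz 1, [:: Y]); (Negz 0, [::])]; [:: (Posz 1, [:: X]); (Negz 0, [::])]];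
  [:: [:: (Posz 1, [:: X; Yi; Xi; Y; X; Yi; Yi; Xi; Y]); (Negz 0, [:: X; Yi; Xi; Y; X; Yi; Yi; Xi; Y; X; Y; Xi])]; [:: (Posz 1, [:: X]); (Negz 0, [::])]; [:: (Posz 1, [:: X]); (Negz 0, [::])]; [:: (Posz 1, [:: Y]); (Negz 0, [::])]];
  [:: [:: (Posz 1, [:: X; Yi; Xi; Y; X; Yi; Yi; Xi]); (Posz 1, [:: X; Yi; Xi; Y; X; Yi; Yi; Xi; Y; X]); (Negz 0, [:: X; Yi; Xi; Y; X; Yi; Yi; Xi; Y; X; Y; Xi; Yi]); (Negz 0, [:: X; Yi; Xi; Y; X; Yi; Yi; Xi; Y; X; Y; Xi; Yi; Yi])]; [:: (Posz 1, [:: Y]); (Negz 0, [::])]; [:: (Posz 1, [:: X]); (Negz 0, [::])]; [:: (Posz 1, [:: Y]); (Negz 0, [::])]]].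

Definition s_t5 : seq (seq ZF) :=
  [:: [:: [:: (Negz 0, [:: X; Yi; Xi; Y]); (Posz 1, [:: X; Yi; Xi; Y; X; Yi; Yi; Xi]); (Negz 1, [:: X; Yi; Xi; Y; X; Yi; Yi; Xi; Y]); (Posz 2, [:: X; Yi; Xi; Y; X; Yi; Yi; Xi; Y; X; Y; Xi]); (Posz 1, [:: Yi; Xi; Y]); (Negz 0, [:: Yi; Xi; Y; X; Yi; Yi; Xi]); (Posz 2, [:: Yi; Xi; Y; X; Yi; Yi; Xi; Y]); (Negz 1, [:: Yi; Xi; Y; X; Yi; Yi; Xi; Y; X; Y; Xi])]; [:: (Posz 1, [:: X]); (Negz 0, [::])]; [:: (Posz 1, [:: X]); (Negz 0, [::])]; [:: (Posz 1, [:: X]); (Negz 0, [::])]; [:: (Posz 1, [:: Y]); (Negz 0, [::])]];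
  [:: [:: (Posz 1, [:: X; Yi; Xi; Y; X; Yi]); (Posz 1, [:: X; Yi; Xi; Y; X; Yi; Yi]); (Negz 1, [:: X; Yi; Xi; Y; X; Yi; Yi; Xi; Y; X]); (Negz 0, [:: Yi; Xi; Y; X; Yi]); (Negz 0, [:: Yi; Xi; Y; X; Yi; Yi]); (Posz 2, [:: Yi; Xi; Y; X; Yi; Yi; Xi; Y; X])]; [:: (Posz 1, [:: Y]); (Negz 0, [::])]; [:: (Posz 1, [:: X]); (Negz 0, [::])]; [:: (Posz 1, [:: X]); (Negz 0, [::])]; [:: (Posz 1, [:: Y]); (Negz 0, [::])]];
  [:: [:: (Negz 1, [:: X; Yi; Xi; Y; X; Yi; Yi; Xi]); (Posz 2, [:: X; Yi; Xi; Y; X; Yi; Yi; Xi; Y]); (Posz 2, [:: Yi; Xi; Y; X; Yi; Yi; Xi]); (Negz 1, [:: Yi; Xi; Y; X; Yi; Yi; Xi; Y])]; [:: (Posz 1, [:: X]); (Negz 0, [::])]; [:: (Posz 1, [:: Y]); (Negz 0, [::])]; [:: (Posz 1, [:: X]); (Negz 0, [::])]; [:: (Posz 1, [:: Y]); (Negz 0, [::])]];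
  [:: [:: (Negz 0, [:: X; Yi; Xi; Y; X; Yi; Yi]); (Posz 2, [:: X; Yi; Xi; Y; X; Yi; Yi; Xi]); (Posz 1, [:: Yi; Xi; Y; X; Yi; Yi]); (Negz 1, [:: Yi; Xi; Y; X; Yi; Yi; Xi])]; [:: (Posz 1, [:: Y]); (Negz 0, [::])]; [:: (Posz 1, [:: Y]); (Negz 0, [::])]; [:: (Posz 1, [:: X]); (Negz 0, [::])]; [:: (Posz 1, [:: Y]); (Negz 0, [::])]];
  [:: [:: (Negz 0, [:: X; Yi; Xi; Y]); (Posz 1, [:: X; Yi; Xi; Y; X; Yi; Yi; Xi]); (Negz 2, [:: X; Yi; Xi; Y; X; Yi; Yi; Xi; Y]); (Posz 3, [:: X; Yi; Xi; Y; X; Yi; Yi; Xi; Y; X; Y; Xi]); (Posz 1, [:: Yi; Xi; Y]); (Negz 0, [:: Yi; Xi; Y; X; Yi; Yi; Xi]); (Posz 3, [:: Yi; Xi; Y; X; Yi; Yi; Xi; Y]); (Negz 2, [:: Yi; Xi; Y; X; Yi; Yi; Xi; Y; X; Y; Xi])]; [:: (Posz 1, [:: X]); (Negz 0, [::])]; [:: (Posz 1, [:: X]); (Negz 0, [::])]; [:: (Posz 1, [:: Y]); (Negz 0, [::])]; [:: (Posz 1, [:: Y]); (Negz 0, [::])]];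
  [:: [:: (Posz 1, [:: X; Yi; Xi; Y; X; Yi]); (Posz 1, [:: X; Yi; Xi; Y; X; Yi; Yi]); (Negz 1, [:: X; Yi; Xi; Y; X; Yi; Yi; Xi]); (Negz 2, [:: X; Yi; Xi; Y; X; Yi; Yi; Xi; Y; X]); (Negz 0, [:: Yi; Xi; Y; X; Yi]); (Negz 0, [:: Yi; Xi; Y; X; Yi; Yi]); (Posz 2, [:: Yi; Xi; Y; X; Yi; Yi; Xi]); (Posz 3, [:: Yi; Xi; Y; X; Yi; Yi; Xi; Y; X])]; [:: (Posz 1, [:: Y]); (Negz 0, [::])]; [:: (Posz 1, [:: X]); (Negz 0, [::])]; [:: (Posz 1, [:: Y]); (Negz 0, [::])]; [:: (Posz 1, [:: Y]); (Negz 0, [::])]];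
  [:: [:: (Negz 0, [:: X; Yi; Xi; Y]); (Negz 0, [:: X; Yi; Xi; Y; X; Yi; Yi; Xi; Y]); (Posz 4, [:: X; Yi; Xi; Y; X; Yi; Yi; Xi; Y; X; Y; Xi]); (Posz 1, [:: Yi; Xi; Y]); (Posz 1, [:: Yi; Xi; Y; X; Yi; Yi; Xi; Y]); (Negz 3, [:: Yi; Xi; Y; X; Yi; Yi; Xi; Y; X; Y; Xi])]; [:: (Posz 1, [:: X]); (Negz 0, [::])]; [:: (Posz 1, [:: Y]); (Negz 0, [::])]; [:: (Posz 1, [:: Y]); (Negz 0, [::])]; [:: (Posz 1, [:: Y]); (Negz 0, [::])]];
  [:: [:: (Negz 0, [:: X; Yi; Xi]); (Posz 1, [:: X; Yi; Xi; Y; X; Yi]); (Negz 0, [:: X; Yi; Xi; Y; X; Yi; Yi; Xi]); (Negz 3, [:: X; Yi; Xi; Y; X; Yi; Yi; Xi; Y; X]); (Posz 4, [:: X; Yi; Xi; Y; X; Yi; Yi; Xi; Y; X; Y; Xi; Yi]); (Posz 1, [:: X; Yi; Xi; Y; X; Yi; Yi; Xi; Y; X; Y; Xi; Yi; Yi]); (Posz 1, [:: Yi; Xi]); (Negz 0, [:: Yi; Xi; Y; X; Yi]); (Posz 1, [:: Yi; Xi; Y; X; Yi; Yi; Xi]); (Posz 4, [:: Yi; Xi; Y; X; Yi; Yi; Xi; Y; X]); (Negz 3, [:: Yi; Xi; Y; X; Yi; Yi; Xi; Y; X; Y; Xi; Yi]); (Negz 0, [:: Yi; Xi; Y; X; Yi;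 Yi; Xi; Y; X; Y; Xi; Yi; Yi])]; [:: (Posz 1, [:: Y]); (Negz 0, [::])]; [:: (Posz 1, [:: Y]); (Negz 0, [::])]; [:: (Posz 1, [:: Y]); (Negz 0, [::])]; [:: (Posz 1, [:: Y]); (Negz 0, [::])]]].

Definition s_dcx : seq (seq ZF) :=
  [:: [:: [:: (Posz 1, [:: Yi; Xi; Y]); (Negz 0, [:: Yi; Xi; Y; X; Yi; Yi; Xi]); (Posz 2, [:: Yi; Xi; Y; X; Yi; Yi; Xi; Y]); (Negz 1, [:: Yi; Xi; Y; X; Yi; Yi; Xi; Y; X; Y; Xi])]; [:: (Posz 1, [:: X]); (Negz 0, [::])]; [:: (Posz 1, [:: X]); (Negz 0, [::])]; [:: (Posz 1, [:: Y]); (Negz 0, [::])]];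
  [:: [:: (Negz 0, [:: Yi; Xi; Y; X; Yi]); (Negz 0, [:: Yi; Xi; Y; X; Yi; Yi]); (Posz 2, [:: Yi; Xi; Y; X; Yi; Yi; Xi; Y; X])]; [:: (Posz 1, [:: Y]); (Negz 0, [::])]; [:: (Posz 1, [:: X]); (Negz 0, [::])]; [:: (Posz 1, [:: Y]); (Negz 0, [::])]];
  [:: [:: (Posz 1, [:: Yi; Xi; Y]); (Posz 1, [:: Yi; Xi; Y; X; Yi; Yi; Xi]); (Posz 1, [:: Yi; Xi; Y; X; Yi; Yi; Xi; Y]); (Negz 2, [:: Yi; Xi; Y; X; Yi; Yi; Xi; Y; X; Y; Xi])]; [:: (Posz 1, [:: X]); (Negz 0, [::])]; [:: (Posz 1, [:: Y]); (Negz 0, [::])]; [:: (Posz 1, [:: Y]); (Negz 0, [::])]];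
  [:: [:: (Posz 1, [:: Yi; Xi]); (Negz 0, [:: Yi; Xi; Y; X; Yi]); (Posz 1, [:: Yi; Xi; Y; X; Yi; Yi; Xi]); (Posz 3, [:: Yi; Xi; Y; X; Yi; Yi; Xi; Y; X]); (Negz 2, [:: Yi; Xi; Y; X; Yi; Yi; Xi; Y; X; Y; Xi; Yi]); (Negz 0, [:: Yi; Xi; Y; X; Yi; Yi; Xi; Y; X; Y; Xi; Yi; Yi])]; [:: (Posz 1, [:: Y]); (Negz 0, [::])]; [:: (Posz 1, [:: Y]); (Negz 0, [::])]; [:: (Posz 1, [:: Y]); (Negz 0, [::])]]].

Fixpoint tauwC (w : word) (m : seq gen) : int :=
  match w with
  | [::] => if m is [::] then 1 else 0
  | l :: w' => foldr (fun k acc => tau_letter l (take k m) * tauwC w' (drop k m) + acc)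
                     0 (iota 0 (size m).+1)
  end.

Lemma sum_foldr (s : seq nat) (F : nat -> int) :
  \sum_(k <- s) F k = foldr (fun k acc => F k + acc) 0 s.
Proof. by elim: s => [|k s IH]; rewrite ?big_nil ?big_cons //= IH. Qed.

Lemma tauwE w m : tauw w m = tauwC w m.
Proof.
elim: w m => [//|l w IH] m.
have -> : tauw (l :: w) m = \sum_(k < (size m).+1) tau_letter l (take k m) * tauw w (drop k m) by [].
rewrite -(big_mkord xpredT (fun k => tau_letter l (take k m) * tauw w (drop k m))).
rewrite /index_iota subn0 sum_foldr.
have -> : tauwC (l :: w) m = foldr (fun k acc => tau_letter l (take k m) * tauwC w (drop k m) + acc)
                     0 (iota 0 (size m).+1) by [].
by elim: (iota 0 (size m).+1) => // k s IHs; rewrite [LHS]/= IHs IH.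
Qed.

Definition tau_coefC (a : ZF) (m : seq gen) : int :=
  foldr (fun p acc => p.1 * tauwC p.2 m + acc) 0 a.

Lemma tau_coefE a m : tau_coef a m = tau_coefC a m.
Proof.
by rewrite /tau_coef; elim: a => [|p a IH]; rewrite ?big_nil ?big_cons //= IH tauwE.
Qed.

Definition p4 (m : seq gen) : int :=
  if m == [:: true; false; true; true] then Negz 1
  else if m == [:: true; true; false; true] then 1 else 0.

Lemma R4 : inR4plus (tau_coef (mx2_trace (mx2_sub (jacobian phi13) mx2_one))).
Proof.
exists p4 => m.
case: m => [|a [|b [|c [|d [|e m]]]]] //= _.
rewrite tau_coefE.
by case: a; case: b; case: c; case: d; vm_compute.
Qed.


Theorem mainTheorem13 :
  let J := jacobian phi13 in
  let t := mx2_trace (mx2_sub J mx2_one) in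
  (* c in F_5, and phi acts trivially on F/F_5 (the B_4 condition) *)
  lcs 5 c13 /\
  (forall w, lcs 5 (winv w ++ ext phi13 w)) /\
  (* phi is not an automorphism of F *)
  ~ isAut phi13 /\
  (* J - 1 in M_2(varpi^4) *)
  (forall i j, inAugPow 4 (mx2_sub J mx2_one i j)) /\
  (* tr(J - 1) = d c / d x  mod varpi^5, and lies in varpi^4 *)
  inAugPow 5 (subZF t (fox gx (elt c13))) /\
  inAugPow 4 (fox gx (elt c13)) /\
  (* tau(tr(J - 1)) mod degree 5 lies in R_4^+ *)
  inR4plus (tau_coef t) /\
  (* yet J is not invertible over ZF *)
  ~ mx2_invertible J.
Proof.
move=> J t.
split; first exact: lcs5_c13.
split; first exact: lcs5_ext.
split; first exact: not_aut.
split.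
  case; case.
  - by apply: (@augPowb_sound _ _ [::]); vm_compute.
  - by apply: (@augPowb_sound _ _ [::]); vm_compute.
  - by apply: (@augPowb_sound _ _ s_exy); vm_compute.
  - by apply: (@augPowb_sound _ _ s_exx); vm_compute.
split; first by apply: (@augPowb_sound _ _ s_t5); vm_compute.
split; first by apply: (@augPowb_sound _ _ s_dcx); vm_compute.
split; first exact: R4.
exact: not_inv.
Qed.
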